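(* Let $\mathcal{M}=(S,P,E,s_{init},L)$ be a CTMC with $E(s)=1$ for all $s\in S$, and let $g$ be a unique absorbing goal state. Let $\delta>0$, $c=e^{\delta}>1$ and $\mathcal{M}'=c\cdot\mathcal{M}$. Then for all $t\geq 0$, $$\mathrm{Diff}_t(\mathcal{M}):=\left|\mathrm{Pr}^{\mathcal{M}'}(\lozenge^{\leq t}g)-\mathrm{Pr}^{\mathcal{M}}(\lozenge^{\leq t}g)\right|=\sum_{n=1}^{\infty}p_n\cdot\mathrm{Diff}_t(\mathcal{E}_n),$$ where $p_n$ denotes the probability to reach $g$ after exactly $n$ (discrete) steps.
   Context: A CTMC $(S,P,E,s_{init},L)$ has finite state set $S$, transition probabilities $P\colon S\to\mathrm{Distr}(S)$, exit rates $E\colon S\to\mathbb{R}_{>0}$ (residence time in $s$ is exponential with rate $E(s)$, then a jump to $s'$ with probability $P(s,s')$), initial state $s_{init}$ and labeling $L$. $\mathrm{Pr}^{\mathcal{M}}(\lozenge^{\leq t}g)$ is the probability that $\mathcal{M}$, started in its initial state, reaches $g$ within time $t$. For $c>0$, $c\cdot\mathcal{M}$ is the CTMC obtained from $\mathcal{M}$ by multiplying all exit rates by $c$. $p_n$ is the probability that the embedded jump chain of $\mathcal{M}$ started in $s_{init}$ enters $g$ for the first time at step exactly $n$. For $n\in\mathbb{N}$, the Erlang CTMC $\mathcal{E}_n$ has non-goal states $s_0,\dots,s_{n-1}$ and goal state $s_n=g$, initial state $s_0$ ($\mathcal{E}_0$ consists only of $g$), all $s_0,\dots,s_{n-1}$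 carry the same label and $g$ a different one, all exit rates equal $1$, $P(s_i,s_{i+1})=1$ for $i<n$ and $P(g,g)=1$. $\mathrm{Diff}_t(\mathcal{E}_n):=|\mathrm{Pr}^{\mathcal{E}_n}(\lozenge^{\leq t}g)-\mathrm{Pr}^{c\cdot\mathcal{E}_n}(\lozenge^{\leq t}g)|$. *)

(* Defs.v *)
From HB Require Import structures.
From mathcomp Require Import all_boot all_order all_algebra.
From mathcomp Require Import all_classical all_reals all_analysis.
Set Implicit Arguments. Unset Strict Implicit. Unset Printing Implicit Defensive.
Import Order.TTheory GRing.Theory Num.Theory.
Import numFieldNormedType.Exports.
Local Open Scope classical_set_scope.
Local Open Scope ring_scope.

(* A CTMC over a finite state type S is given by
   P : S -> S -> R (transition probabilities of the embedded jump chain),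
   E : S -> R (exit rates), an initial state, and a (unique) goal state g. *)

Definition is_stochastic (R : realType) (S : finType) (P : S -> S -> R) :=
  (forall s s', 0 <= P s s') /\ (forall s, \sum_(s' : S) P s s' = 1).

(* first_hit_time P E g k s t : probability that the CTMC started in s enters
   g for the first time at (discrete) step exactly k, and does so within
   time t.  Path semantics: residence in a non-goal state s is Exp(E s)
   distributed (density E s * exp(-E s x)), independent of the rest, then a
   jump to s' with probability P s s'. *)
Fixpoint first_hit_time (R : realType) (S : finType) (P : S -> S -> R)
    (E : S -> R) (g : S) (k : nat) (s : S) (t : R) : R :=
  match k with
  | 0%N => (s == g)%:R
  | k'.+1 =>
      (s != g)%:R *
      Rintegral (@lebesgue_measure R) `[0, t]
        (fun x => E s * expR (- (E s * x)) *
                  \sum_(s' : S) P s s' * first_hit_time P E g k' s' (t - x))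
  end.

(* Pr^M(<>^{<= t} g): the events "g first entered at step k within time t"
   are disjoint for different k, and their union is the event of reaching g
   within time t. *)
Definition reach_prob (R : realType) (S : finType) (P : S -> S -> R)
    (E : S -> R) (s_init g : S) (t : R) : R :=
  limn (fun N => \sum_(0 <= k < N) first_hit_time P E g k s_init t).

Definition scale_rates (R : realType) (S : finType) (c : R) (E : S -> R) : S -> R :=
  fun s => c * E s.

Fixpoint first_hit_step (R : realType) (S : finType) (P : S -> S -> R)
    (g : S) (n : nat) (s : S) : R :=
  match n with
  | 0%N => (s == g)%:R
  | n'.+1 => (s != g)%:R * \sum_(s' : S) P s s' * first_hit_step P g n' s'
  end.

(* Erlang CTMC E_n: states s_0..s_n = 'I_n.+1, goal g = s_n = ord_max,
   initial s_0 = ord0, rates 1, P(s_i, s_{i+1}) = 1, P(g,g) = 1. *)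
Definition erlang_P (R : realType) (n : nat) (i j : 'I_n.+1) : R :=
  if i == ord_max then (j == ord_max)%:R else (val j == (val i).+1)%:R.

Definition erlang_E (R : realType) (n : nat) : 'I_n.+1 -> R := fun _ => 1.

Definition erlang_diff (R : realType) (c : R) (n : nat) (t : R) : R :=
  `| reach_prob (@erlang_P R n) (@erlang_E R n) ord0 ord_max t
     - reach_prob (@erlang_P R n) (scale_rates c (@erlang_E R n)) ord0 ord_max t |.

(* Main.v *)
Require Import Defs.
From HB Require Import structures.
From mathcomp Require Import all_boot all_order all_algebra.
From mathcomp Require Import all_classical all_reals all_analysis.
From mathcomp Require Import ring lra zify.
Import Order.TTheory GRing.Theory Num.Theory.
Import numFieldNormedType.Exports.
Local Open Scope ring_scope.

Section S.
Variable R : realType.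

Lemma scaleRE (a b : R) : a *: b = a * b.
Proof. by []. Qed.

Lemma is_derive_ext (f g : R -> R) (x df : R) :
  f =1 g -> is_derive x 1 f df -> is_derive x 1 g df.
Proof. by move=> /boolp.funext ->. Qed.

Lemma is_derive_ext2 {f g : R -> R} {x df : R} :
  is_derive x 1 f df -> f =1 g -> is_derive x 1 g df.
Proof. by move=> h e; exact: is_derive_ext e h. Qed.

Lemma is_derive_mono n (x : R) :
  is_derive x 1 (fun z : R => z ^+ n.+1) (n.+1%:R * x ^+ n).
Proof.
apply: (@is_derive_ext ((@id R) ^+ n.+1)).
  by move=> z; rewrite exprfctE.
apply: is_derive_eq. by rewrite scaleRE mulr1.
Qed.

Lemma is_derive_mulc {f : R -> R} (c : R) {x df : R} :
  is_derive x 1 f df -> is_derive x 1 (fun z => f z * c) (df * c).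
Proof.
move=> h; apply: (@is_derive_ext (c *: f)).
  by move=> z; exact: mulrC.
have := is_deriveZ c h. by rewrite scaleRE mulrC.
Qed.

Lemma is_derive_add {f g : R -> R} {x df dg : R} :
  is_derive x 1 f df -> is_derive x 1 g dg -> is_derive x 1 (fun z => f z + g z) (df + dg).
Proof.
move=> h1 h2; apply: (@is_derive_ext (f + g)) => //.
Qed.

Lemma is_derive_mul {f g : R -> R} {x df dg : R} :
  is_derive x 1 f df -> is_derive x 1 g dg -> is_derive x 1 (fun z => f z * g z) (df * g x + f x * dg).
Proof.
move=> h1 h2; apply: (@is_derive_ext (f * g)) => //.
by apply: is_derive_eq; rewrite !scaleRE addrC mulrC.
Qed.

Lemma is_derive_comp {f g : R -> R} {x df dg : R} :
  is_derive (g x) 1 f df -> is_derive x 1 g dg -> is_derive x 1 (fun z => f (g z)) (df * dg).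
Proof.
move=> h1 h2; apply: (@is_derive_ext (f \o g)) => //.
Qed.

Lemma is_derive_cstf (c x : R) : is_derive x 1 (fun _ : R => c) 0.
Proof. exact: is_derive_cst. Qed.

Lemma is_derive_idf (x : R) : is_derive x 1 (fun z : R => z) 1.
Proof. exact: is_derive_id. Qed.

Fixpoint qs (k : nat) (y : R) : R :=
  match k with 0%N => 0 | k'.+1 => qs k' y + y ^+ k' / (k'`!)%:R end.

Lemma qs_derive k (y : R) : is_derive y 1 (qs k.+1) (qs k y).
Proof.
elim: k y => [|k IH] y.
  have -> : qs 1 = cst 1 by apply/funext => z /=; rewrite add0r expr0 fact0 divr1.
  exact: is_derive_eq.
apply: (@is_derive_ext (fun z => qs k.+1 z + z ^+ k.+1 / (k.+1)`!%:R)) => //.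
have h := is_derive_add (IH y) (is_derive_mulc ((k.+1)`!%:R^-1) (is_derive_mono k y)).
apply: (is_derive_eq h).
rewrite /= factS natrM invfM; congr (_ + _).
have hk : (k.+1%:R : R) != 0 by rewrite pnatr_eq0.
have hk2 : (k`!%:R : R) != 0 by rewrite pnatr_eq0 -lt0n fact_gt0.
by field; rewrite hk2 addrC natr1 hk.
Qed.

Lemma is_derive_neg {f : R -> R} {x df : R} :
  is_derive x 1 f df -> is_derive x 1 (fun z => - f z) (- df).
Proof. by move=> h; apply: (@is_derive_ext (- f)). Qed.

Lemma is_derive_cmul {f : R -> R} (c : R) {x df : R} :
  is_derive x 1 f df -> is_derive x 1 (fun z => c * f z) (c * df).
Proof.
move=> h; apply: (@is_derive_ext (fun z => f z * c)); first by move=> z; exact: mulrC.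
by rewrite mulrC; exact: is_derive_mulc.
Qed.

Lemma is_derive_lin (a b x : R) : is_derive x 1 (fun z => a * (b - z)) (- a).
Proof.
have h := is_derive_cmul a (is_derive_add (is_derive_cstf b x) (is_derive_neg (is_derive_idf x))).
by apply: (is_derive_eq h); rewrite add0r mulrN1.
Qed.

Lemma is_derive_lin2 (a x : R) : is_derive x 1 (fun z => - (a * z)) (- a).
Proof.
have h := is_derive_neg (is_derive_cmul a (is_derive_idf x)).
by apply: (is_derive_eq h); rewrite mulr1.
Qed.

Definition qsd (k : nat) (y : R) : R := if k is k'.+1 then qs k' y else 0.

Lemma qs_derive_all k (y : R) : is_derive y 1 (qs k) (qsd k y).
Proof.
case: k => [|k]; last exact: qs_derive.
have -> : qs 0 = cst 0 by apply/funext.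
exact: is_derive_cst.
Qed.

Lemma qs_at0 k : qs k.+1 0 = 1.
Proof.
elim: k => [|k IH]; first by rewrite /= add0r expr0 fact0 divr1.
by rewrite /= in IH *; rewrite IH expr0n /= mul0r addr0.
Qed.

Definition G (k : nat) (v : R) : R := 1 - expR (- v) * qs k v.

Lemma expN_derive (x : R) : is_derive x 1 (fun z => expR (- z)) (- expR (- x)).
Proof.
have h := is_derive_comp (is_derive_expR (- x)) (is_derive_neg (is_derive_idf x)).
by apply: (is_derive_eq h); rewrite mulrN1.
Qed.

Lemma G_derive k (v : R) : is_derive v 1 (G k)
   (- (- expR (- v) * qs k v + expR (- v) * qsd k v)).
Proof.
have h := is_derive_add (is_derive_cstf 1 v)
  (is_derive_neg (is_derive_mul (expN_derive v) (qs_derive_all k v))).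
apply: (is_derive_eq (@is_derive_ext2 _ (G k) _ _ h _)); last by rewrite add0r.
by move=> z; rewrite /G.
Qed.

Lemma G_mono k (u v : R) : 0 <= u -> u <= v -> G k u <= G k v.
Proof.
move=> u0 uv; rewrite /G lerD2l lerN2.
case: k => [|k]; first by rewrite /= !mulr0.
set h := (fun z => expR (- z) * qs k.+1 z).
have hd (z : R) : is_derive z 1 h (- (expR (- z) * (z ^+ k / (k`!)%:R))).
  have h1 := is_derive_mul (expN_derive z) (qs_derive_all k.+1 z).
  by apply: (is_derive_eq h1); rewrite /=; ring.
have [<-|uv'] := eqVneq u v; first exact: lexx.
have {uv'}uv : u < v by rewrite lt_neqAle uv' uv.
apply: (@ler0_derive1_le_cc R h u v).
- by move=> x _; case: (hd x).
- move=> x; rewrite in_itv /= => /andP[ux _].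
  rewrite derive1E; case: (hd x) => _ ->.
  rewrite oppr_le0; apply: mulr_ge0; first exact: expR_ge0.
  apply: mulr_ge0; last by rewrite invr_ge0 ler0n.
  by apply: exprn_ge0; rewrite (le_trans u0) ?ltW.
- by apply: derivable_within_continuous => x _; case: (hd x).
- by rewrite in_itv /= lexx ltW.
- by rewrite in_itv /= lexx ltW.
- exact: ltW.
Qed.


Lemma deriv_cont {f : R -> R} {x df : R} : is_derive x 1 f df -> {for x, continuous f}.
Proof. by move=> [d _]; exact/differentiable_continuous/derivable1_diffP. Qed.

Lemma int_step k (lam C t : R) : 0 <= t ->
  Rintegral lebesgue_measure `[0, t]%classic
    (fun x => lam * expR (- (lam * x)) * (C * G k (lam * (t - x))))
  = C * G k.+1 (lam * t).
Proof.
rewrite le_eqVlt => /predU1P[<-|t0].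
  rewrite set_itv1 Rintegral_set1 mulr0 /G oppr0 expR0 qs_at0 mul1r subrr.
  by rewrite mulr0.
pose f := (fun x : R => lam * expR (- (lam * x)) * (C * G k (lam * (t - x)))).
pose H := fun x => C * (- expR (- (lam * x)) + expR (- (lam * t)) * qs k.+1 (lam * (t - x))).
have Hd (x : R) : is_derive x 1 H (f x).
  have h1 := is_derive_neg (is_derive_comp (g := fun z => - (lam * z)) (is_derive_expR _) (is_derive_lin2 lam x)).
  have h2 := is_derive_cmul (expR (- (lam * t)))
     (is_derive_comp (g := fun z => lam * (t - z)) (qs_derive k (lam * (t - x))) (is_derive_lin lam t x)).
  have h := is_derive_cmul C (is_derive_add h1 h2).
  apply: (is_derive_eq h); rewrite /f /G /=.
  have E : expR (- (lam * x)) * expR (- (lam * (t - x))) = expR (- (lam * t)).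
    by rewrite -expRD; congr expR; ring.
  by rewrite -E; ring.
have fd (x : R) : derivable f x 1.
  have h := is_derive_mul (is_derive_cmul lam (is_derive_comp (g := fun z => - (lam * z)) (is_derive_expR _) (is_derive_lin2 lam x)))
    (is_derive_cmul C (is_derive_comp (g := fun z => lam * (t - z)) (G_derive k _) (is_derive_lin lam t x))).
  by case: h.
rewrite /Rintegral (@continuous_FTC2 R f H 0 t t0).
- rewrite -EFinB /= /H subrr !mulr0 subr0 qs_at0 oppr0 expR0 /G; ring.
- exact: (@derivable_within_continuous R R f `[0, t]%R (fun x _ => fd x)).
- split.
  + by move=> x _; case: (Hd x).
  + by apply: cvg_at_right_filter; exact: deriv_cont (Hd 0).
  + by apply: cvg_at_left_filter; exact: deriv_cont (Hd t).
- by move=> x _; rewrite derive1E; case: (Hd x).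
Qed.


Lemma qs_ge0 k (v : R) : 0 <= v -> 0 <= qs k v.
Proof.
move=> v0; elim: k => [|k IH] /=; first exact: lexx.
apply: addr_ge0 => //; apply: mulr_ge0; first exact: exprn_ge0.
by rewrite invr_ge0 ler0n.
Qed.

Lemma G_le1 k (v : R) : 0 <= v -> G k v <= 1.
Proof.
move=> v0; rewrite /G lerBlDr lerDl; apply: mulr_ge0; first exact: expR_ge0.
exact: qs_ge0.
Qed.

Lemma G_ge0 k (v : R) : 0 <= v -> 0 <= G k v.
Proof.
move=> v0; case: k => [|k]; first by rewrite /G /= mulr0 subr0.
have -> : 0 = G k.+1 0 by rewrite /G oppr0 expR0 qs_at0 mul1r subrr.
exact: G_mono.
Qed.

Lemma fhs_ge0 (S : finType) (P : S -> S -> R) g :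
  (forall s s', 0 <= P s s') -> forall k s, 0 <= first_hit_step P g k s.
Proof.
move=> P0; elim => [|k IH] s /=; first exact: ler0n.
apply: mulr_ge0; first exact: ler0n.
by apply: sumr_ge0 => s' _; apply: mulr_ge0.
Qed.

Lemma fhs_sum_le1 (S : finType) (P : S -> S -> R) g :
  is_stochastic P -> forall N s, \sum_(0 <= k < N) first_hit_step P g k s <= 1.
Proof.
move=> [P0 P1]; elim => [|N IH] s; first by rewrite big_geq.
rewrite big_nat_recl //= -big_distrr /=.
rewrite (exchange_big_dep xpredT) //=.
under eq_bigr do rewrite -big_distrr /=.
have H : \sum_(s' : S) P s s' * \sum_(0 <= i < N) first_hit_step P g i s' <= 1.
  rewrite -(P1 s); apply: ler_sum => s' _; rewrite -[X in _ <= X]mulr1.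
  exact: ler_wpM2l.
case: eqP => [_|_] /=; first by rewrite mul0r addr0.
by rewrite add0r mul1r.
Qed.

Lemma fht_closed (S : finType) (P : S -> S -> R) (E : S -> R) g (lam : R) :
  (forall s, E s = lam) ->
  forall k s u, 0 <= u ->
  first_hit_time P E g k s u = first_hit_step P g k s * G k (lam * u).
Proof.
move=> hE; elim => [|k IH] s u u0 /=.
  by rewrite /G /= mulr0 subr0 mulr1.
rewrite hE -mulrA; congr (_ * _).
set C := \sum_(s' : S) P s s' * first_hit_step P g k s'.
rewrite -(int_step k lam C u u0); apply: eq_Rintegral => x.
rewrite inE /= in_itv /= => /andP[x0 xu].
congr (_ * _); rewrite /C big_distrl /=.
apply: eq_bigr => s' _; rewrite IH ?subr_ge0 //.
by rewrite mulrA.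
Qed.

Lemma erlang_fhs n k (i : 'I_n.+1) :
  first_hit_step (@erlang_P R n) ord_max k i = (k == (n - val i)%N)%:R.
Proof.
elim: k i => [|k IH] i /=.
  suff -> : (i == ord_max) = (0 == n - i)%N by [].
  apply/idP/idP => /eqP h; apply/eqP.
    by rewrite h /= subnn.
  by apply: val_inj => /=; have := ltn_ord i; lia.
case: (eqVneq i ord_max) => [->|ne]; first by rewrite /= mul0r subnn.
have hi : (i.+1 < n.+1)%N.
  have := ltn_ord i; move: ne; rewrite -val_eqE /= => ne; lia.
rewrite mul1r (bigD1 (Ordinal hi)) //= big1 => [|j hj].
  rewrite addr0 /erlang_P (negbTE ne) eqxx mul1r IH /=.
  suff -> : (k == n - i.+1)%N = (k.+1 == n - i)%N by [].
  have := ltn_ord i; move: ne; rewrite -val_eqE /= => ne li; apply/idP/idP => /eqP h; apply/eqP; lia.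
rewrite /erlang_P (negbTE ne); case: eqP => [h|_]; last by rewrite mul0r.
by move: hj; rewrite -val_eqE /= h eqxx.
Qed.

Lemma erlang_reach n (E : 'I_n.+1 -> R) (lam t : R) : (forall s, E s = lam) -> 0 <= t ->
  reach_prob (@erlang_P R n) E ord0 ord_max t = G n (lam * t).
Proof.
move=> hE t0; rewrite /reach_prob.
apply: cvg_lim; first exact: Rhausdorff.
apply: cvg_near_cst; near=> N.
have hN : (n < N)%N by near: N; exists n.+1.
rewrite (eq_bigr (fun k => (k == n)%:R * G k (lam * t))); last first.
  by move=> k _; rewrite (fht_closed _ _ _ _ _ hE) // erlang_fhs subn0.
rewrite (bigD1_seq n) ?mem_index_iota ?iota_uniq //= eqxx mul1r big1_seq ?addr0 //.
by move=> k /andP[hk _]; rewrite (negbTE hk) mul0r.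
Unshelve. all: by end_near.
Qed.

End S.

Lemma limn_ext (R : realType) (u v : nat -> R) : (forall N, u N = v N) -> limn u = limn v.
Proof. by move=> h; rewrite (boolp.funext h). Qed.

Theorem theorem5 (R : realType) (S : finType) (P : S -> S -> R) (E : S -> R)
    (s_init g : S) (delta c t : R) :
  is_stochastic P ->
  (forall s, E s = 1) ->
  P g g = 1 ->
  0 < delta ->
  c = expR delta ->
  0 <= t ->
  `| reach_prob P (scale_rates c E) s_init g t - reach_prob P E s_init g t |
  = limn (fun N => \sum_(1 <= n < N) first_hit_step P g n s_init * erlang_diff c n t).
Proof.
move=> hst hE1 Pgg dpos hc t0.
have c1 : 1 <= c by rewrite hc -expR0 ler_expR ltW.
have ct0 : 0 <= c * t by rewrite mulr_ge0 // (le_trans ler01 c1).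
have hEc : forall s, scale_rates c E s = c by move=> s; rewrite /scale_rates hE1 mulr1.
pose a := fun N => \sum_(0 <= k < N) first_hit_step P g k s_init * G R k (c * t).
pose b := fun N => \sum_(0 <= k < N) first_hit_step P g k s_init * G R k (1 * t).
have ra : reach_prob P (scale_rates c E) s_init g t = limn a.
  rewrite /reach_prob; apply: limn_ext => N.
  by apply: eq_bigr => k _; exact: fht_closed.
have rb : reach_prob P E s_init g t = limn b.
  rewrite /reach_prob; apply: limn_ext => N.
  by apply: eq_bigr => k _; exact: fht_closed.
have ed n : erlang_diff c n t = G R n (c * t) - G R n (1 * t).
  rewrite /erlang_diff (@erlang_reach R n _ 1) // (@erlang_reach R n _ c) //; last first.
    by move=> s; rewrite /scale_rates /erlang_E mulr1.
  rewrite distrC ger0_norm // subr_ge0; apply: G_mono; first by rewrite mul1r.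
  by rewrite mul1r -{1}(mul1r t) ler_wpM2r.
have hd N : \sum_(1 <= n < N) first_hit_step P g n s_init * erlang_diff c n t = a N - b N.
  rewrite /a /b /=.
  under eq_bigr do rewrite ed.
  rewrite -sumrB; case: N => [|N]; first by rewrite !big_geq.
  rewrite (big_ltn (m := 0%N)) // /G /= !mulr0 !subr0 subrr add0r.
  by apply: eq_bigr => k _; rewrite mulrBr.
have P0 := (proj1 hst).
have cvgab (v : R) : 0 <= v -> cvgn (fun N => \sum_(0 <= k < N) first_hit_step P g k s_init * G R k v).
  move=> v0; apply: nondecreasing_is_cvgn.
    apply: (@nondecreasing_series R _ xpredT 0%N) => k _ _.
    by apply: mulr_ge0; [exact: fhs_ge0 | exact: G_ge0].
  exists 1 => _ [N _ <-].
  apply: (le_trans _ (@fhs_sum_le1 R S P g hst N s_init)).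
  apply: ler_sum => k _; rewrite -[X in _ <= X]mulr1; apply: ler_wpM2l.
    exact: fhs_ge0.
  exact: G_le1.
have ca : cvgn a by exact: cvgab.
have cb : cvgn b by apply: cvgab; rewrite mul1r.
have hdl : limn (fun N => \sum_(1 <= n < N) first_hit_step P g n s_init * erlang_diff c n t)
   = limn (a - b) by apply: limn_ext => N; exact: hd N.
rewrite ra rb -limB // -hdl ger0_norm //.
apply: limr_ge.
  have -> : (fun N => \sum_(1 <= n < N) first_hit_step P g n s_init * erlang_diff c n t)
    = a - b by apply/funext => N; exact: hd N.
  exact: is_cvgB.
near=> N; apply: sumr_ge0 => n _; apply: mulr_ge0; first exact: fhs_ge0.
exact: normr_ge0.
Unshelve. all: by end_near.
Qed.
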